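(* Let $r_0>0$ be such that for every $0\le r\le r_0$ and every $\beta\ge0$ one has $\int_0^\beta (r^2+2\sin^2y)^{1/2}\bigl(\frac34-\sin^2y\bigr)dy\ge0$. For $r>0$ and $w,z\in\mathbb R$ define \begin{align*} G_0(r,w)&=\int_0^w\Bigl(1+\frac{2\sin^2(ry)}{r^2}\Bigr)^{1/2}\frac{2\sin^2(ry)}{r^2}\,dy,\\ G_1(r,z)&=\frac32\int_0^z G_0(r,w)\Bigl(1+\frac{2\sin^2(rw)}{r^2}\Bigr)^{1/2}dw,\\ G_2(r,w)&=\int_0^w\Bigl(1+\frac{2\sin^2(ry)}{r^2}\Bigr)^{1/2}dy. \end{align*} Then for every $0<r\le r_0$ and every $z\in\mathbb R$, \[ |G_1(r,z)|\le\frac94\cdot\frac12\cdot\frac{\bigl(G_2(r,z)\bigr)^2}{r^2}. \] *)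

(* Defs.v *)
From Stdlib Require Import Reals.
From Coquelicot Require Import Coquelicot.
Open Scope R_scope.

Definition G0 (r w : R) : R :=
  RInt (fun y => sqrt (1 + 2 * (sin (r * y))^2 / r^2) * (2 * (sin (r * y))^2 / r^2)) 0 w.

Definition G1 (r z : R) : R :=
  3/2 * RInt (fun w => G0 r w * sqrt (1 + 2 * (sin (r * w))^2 / r^2)) 0 z.

Definition G2 (r w : R) : R :=
  RInt (fun y => sqrt (1 + 2 * (sin (r * y))^2 / r^2)) 0 w.

(* Main.v *)
Require Import Defs.
From Stdlib Require Import Reals Lra.
From Coquelicot Require Import Coquelicot.
Open Scope R_scope.

Definition Ff (r y : R) := sqrt (1 + 2 * (sin (r * y))^2 / r^2).
Definition Kf (r y : R) := Ff r y * (2 * (sin (r * y))^2 / r^2).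

Lemma arg_pos r y : r <> 0 -> 0 < 1 + 2 * (sin (r * y))^2 / r^2.
Proof.
  intros Hr. assert (0 < r^2) by (apply pow2_gt_0; auto).
  assert (0 <= 2 * (sin (r * y))^2 / r^2).
  { apply Rle_mult_inv_pos; auto. apply Rmult_le_pos; [lra| apply pow2_ge_0]. }
  lra.
Qed.

Lemma cF r y : r <> 0 -> continuous (Ff r) y.
Proof.
  intros Hr. apply (@ex_derive_continuous R_AbsRing R_NormedModule). unfold Ff. auto_derive.
  generalize (arg_pos r y Hr); simpl; lra.
Qed.

Lemma cK r y : r <> 0 -> continuous (Kf r) y.
Proof.
  intros Hr. apply (@ex_derive_continuous R_AbsRing R_NormedModule). unfold Kf, Ff. auto_derive.
  generalize (arg_pos r y Hr); simpl; lra.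
Qed.

Lemma G0E r : G0 r = fun w => RInt (Kf r) 0 w.
Proof. reflexivity. Qed.
Lemma G2E r : G2 r = fun w => RInt (Ff r) 0 w.
Proof. reflexivity. Qed.

Lemma exF r a b : r <> 0 -> ex_RInt (Ff r) a b.
Proof. intros Hr; apply (@ex_RInt_continuous R_CompleteNormedModule); intros; now apply cF. Qed.
Lemma exK r a b : r <> 0 -> ex_RInt (Kf r) a b.
Proof. intros Hr; apply (@ex_RInt_continuous R_CompleteNormedModule); intros; now apply cK. Qed.

Lemma G0_der r w : r <> 0 -> is_derive (G0 r) w (Kf r w).
Proof.
  intros Hr. rewrite G0E. apply (is_derive_RInt (Kf r) _ 0).
  - apply filter_forall. intros; apply (@RInt_correct R_CompleteNormedModule), exK, Hr.
  - now apply cK.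
Qed.
Lemma G2_der r w : r <> 0 -> is_derive (G2 r) w (Ff r w).
Proof.
  intros Hr. rewrite G2E. apply (is_derive_RInt (Ff r) _ 0).
  - apply filter_forall. intros; apply (@RInt_correct R_CompleteNormedModule), exF, Hr.
  - now apply cF.
Qed.

Lemma cG0 r w : r <> 0 -> continuous (G0 r) w.
Proof. intros Hr. apply (@ex_derive_continuous R_AbsRing R_NormedModule).
  eexists; now apply G0_der. Qed.
Lemma cG2 r w : r <> 0 -> continuous (G2 r) w.
Proof. intros Hr. apply (@ex_derive_continuous R_AbsRing R_NormedModule).
  eexists; now apply G2_der. Qed.

Definition Hf r w := G0 r w * Ff r w.
Lemma cH r w : r <> 0 -> continuous (Hf r) w.
Proof. intros Hr. apply (@continuous_mult R_UniformSpace R_AbsRing (G0 r) (Ff r)).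
  now apply cG0. now apply cF. Qed.
Lemma exH r a b : r <> 0 -> ex_RInt (Hf r) a b.
Proof. intros Hr; apply (@ex_RInt_continuous R_CompleteNormedModule); intros; now apply cH. Qed.

Lemma G1E r z : G1 r z = 3/2 * RInt (Hf r) 0 z.
Proof. reflexivity. Qed.
Lemma sqrtE r y : 0 < r -> sqrt (r^2 + 2 * (sin (r*y))^2) = r * Ff r y.
Proof.
  intros Hr. unfold Ff.
  replace (r^2 + 2 * (sin (r*y))^2) with (r^2 * (1 + 2 * (sin (r * y))^2 / r^2)) by (field; lra).
  rewrite sqrt_mult, sqrt_pow2; try lra. apply pow2_ge_0.
  left; apply arg_pos; lra.
Qed.

Lemma key r w : 0 < r -> 3/(2*r^2) * G2 r w - G0 r w =
  2/r^4 * RInt (fun u => sqrt (r^2 + 2 * (sin u)^2) * (3/4 - (sin u)^2)) 0 (r*w).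
Proof.
  intros Hr. assert (Hr0 : r <> 0) by lra.
  set (h := fun u => sqrt (r^2 + 2 * (sin u)^2) * (3/4 - (sin u)^2)).
  assert (Hh : ex_RInt h (r*0+0) (r*w+0)).
  { apply (@ex_RInt_continuous R_CompleteNormedModule). intros.
    apply (@ex_derive_continuous R_AbsRing R_NormedModule). unfold h. auto_derive.
    assert (0 < r^2) by (apply pow2_gt_0; auto).
    generalize (pow2_ge_0 (sin z)). simpl in *. lra. }
  replace (RInt h 0 (r*w)) with (RInt (fun y => r * (h (r*y+0))) 0 w).
  2:{ etransitivity; [apply (RInt_comp_lin h r 0 0 w Hh)|f_equal; ring]. }
  rewrite G2E, G0E.
  transitivity (RInt (fun y => 3/(2*r^2) * Ff r y - Kf r y) 0 w).
  { symmetry. apply is_RInt_unique.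
    apply (@is_RInt_minus R_NormedModule).
    apply (@is_RInt_scal R_NormedModule). apply (@RInt_correct R_CompleteNormedModule), exF, Hr0.
    apply (@RInt_correct R_CompleteNormedModule), exK, Hr0. }
  replace (2 / r ^ 4 * RInt (fun y : R => r * h (r * y + 0)) 0 w) with
    (RInt (fun y : R => 2 / r ^ 4 * (r * h (r * y + 0))) 0 w).
  2:{ apply is_RInt_unique. apply (@is_RInt_scal R_NormedModule).
      apply (@RInt_correct R_CompleteNormedModule).
      exact (@ex_RInt_comp_lin R_NormedModule h r 0 0 w Hh). }
  apply RInt_ext. intros y _.
  unfold h.
  replace (r*y+0) with (r*y) by ring. rewrite sqrtE by exact Hr.
  unfold Kf. assert (E : forall F s, 3/(2*r^2)*F - F*(2*s^2/r^2) = 2/r^4*(r*(r*F*(3/4-s^2)))) by (intros; field; auto). apply E.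
Qed.

Lemma odd_int f s w : (forall a b, ex_RInt f a b) -> (forall y, f (-y) = s * f y) ->
  RInt f 0 (-w) = - s * RInt f 0 w.
Proof.
  intros Hex Hp.
  transitivity (RInt (fun y => -1 * f (-1*y+0)) 0 w).
  { symmetry. etransitivity; [apply (RInt_comp_lin f (-1) 0 0 w), Hex|f_equal; ring]. }
  transitivity (RInt (fun y => (- s) * f y) 0 w).
  { apply RInt_ext. intros y _. replace (-1*y+0) with (-y) by ring. rewrite Hp. assert (E : forall a : R, -1 * (s*a) = -s * a) by (intros; ring). apply E. }
  apply is_RInt_unique. apply (@is_RInt_scal R_NormedModule).
  apply (@RInt_correct R_CompleteNormedModule), Hex.
Qed.

Lemma Ff_even r y : Ff r (-y) = 1 * Ff r y.
Proof. unfold Ff. rewrite Rmult_1_l. replace (r * - y) with (- (r*y)) by ring. rewrite sin_neg. replace ((- sin (r*y))^2) with (sin (r*y)^2) by ring. reflexivity. Qed.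
Lemma Kf_even r y : Kf r (-y) = 1 * Kf r y.
Proof. unfold Kf. rewrite Ff_even. replace (r * - y) with (- (r*y)) by ring. rewrite sin_neg. unfold Rdiv. ring. Qed.

Lemma G0_odd r w : r <> 0 -> G0 r (-w) = - G0 r w.
Proof. intros Hr. rewrite G0E. rewrite (odd_int (Kf r) 1 w). ring.
  intros; now apply exK. apply Kf_even. Qed.
Lemma G2_odd r w : r <> 0 -> G2 r (-w) = - G2 r w.
Proof. intros Hr. rewrite G2E. rewrite (odd_int (Ff r) 1 w). ring.
  intros; now apply exF. apply Ff_even. Qed.
Lemma G1_even r z : r <> 0 -> G1 r (-z) = G1 r z.
Proof. intros Hr. rewrite !G1E. rewrite (odd_int (Hf r) (-1) z). ring.
  intros; now apply exH. intros y; unfold Hf. rewrite G0_odd, Ff_even by auto. assert (E: forall a b:R, -a*(1*b) = -1*(a*b)) by (intros; ring). apply E. Qed.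

Lemma Ff_ge0 r y : 0 <= Ff r y.
Proof. apply sqrt_pos. Qed.
Lemma Kf_ge0 r y : r <> 0 -> 0 <= Kf r y.
Proof. intros Hr. unfold Kf. apply Rmult_le_pos. apply Ff_ge0.
  apply Rle_mult_inv_pos. apply Rmult_le_pos; [lra| apply pow2_ge_0].
  apply pow2_gt_0; auto. Qed.

Lemma G0_bound r0 (Hint : forall r beta, 0 <= r <= r0 -> 0 <= beta ->
     0 <= RInt (fun y => sqrt (r^2 + 2 * (sin y)^2) * (3/4 - (sin y)^2)) 0 beta)
  r w : 0 < r <= r0 -> 0 <= w -> 0 <= G0 r w <= 3/(2*r^2) * G2 r w.
Proof.
  intros Hr Hw. split.
  - rewrite G0E. apply RInt_ge_0; auto. apply exK; lra. intros; apply Kf_ge0; lra.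
  - generalize (key r w (proj1 Hr)). intros E.
    assert (0 <= 2 / r^4 * RInt (fun u => sqrt (r^2 + 2 * (sin u)^2) * (3/4 - (sin u)^2)) 0 (r*w)).
    { apply Rmult_le_pos. apply Rle_mult_inv_pos; [lra|apply pow_lt; lra].
      apply Hint; [lra|]. apply Rmult_le_pos; lra. }
    lra.
Qed.

Lemma G2sq r z : r <> 0 ->
  is_RInt (fun w => 3/(2*r^2) * (G2 r w * Ff r w)) 0 z (3/(2*r^2) * (G2 r z ^2 / 2)).
Proof.
  intros Hr.
  assert (H0 : G2 r 0 = 0) by (rewrite G2E; apply (@RInt_point R_CompleteNormedModule)).
  set (f := fun x => 3/(4*r^2) * G2 r x ^ 2).
  replace (3/(2*r^2) * (G2 r z ^2 / 2)) with (minus (f z) (f 0)).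
  2:{ unfold f, minus, plus, opp; simpl. rewrite H0. field. auto. }
  apply (@is_RInt_derive R_CompleteNormedModule).
  - intros x _. unfold f.
    replace (3 / (2 * r ^ 2) * (G2 r x * Ff r x)) with (3/(4*r^2) * (INR 2 * Ff r x * G2 r x ^ Nat.pred 2)).
    2:{ simpl. field. auto. }
    apply is_derive_scal, is_derive_pow, G2_der, Hr.
  - intros x _.
    apply (@continuous_mult R_UniformSpace R_AbsRing (fun _ => 3/(2*r^2)) (fun x => G2 r x * Ff r x)).
    apply continuous_const.
    apply (@continuous_mult R_UniformSpace R_AbsRing (G2 r) (Ff r)).
    now apply cG2. now apply cF.
Qed.

Lemma main_pos r0 (Hint : forall r beta, 0 <= r <= r0 -> 0 <= beta ->
     0 <= RInt (fun y => sqrt (r^2 + 2 * (sin y)^2) * (3/4 - (sin y)^2)) 0 beta)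
  r z : 0 < r <= r0 -> 0 <= z ->
    Rabs (G1 r z) <= 9/4 * (1/2) * ((G2 r z)^2 / r^2).
Proof.
  intros Hr Hz. assert (Hr0 : r <> 0) by lra.
  rewrite G1E.
  pose proof (G2sq r z Hr0) as HS.
  assert (L : 0 <= RInt (Hf r) 0 z).
  { apply RInt_ge_0; auto. apply exH; auto. intros x Hx. unfold Hf.
    apply Rmult_le_pos. apply (G0_bound r0 Hint r x); lra. apply Ff_ge0. }
  assert (U : RInt (Hf r) 0 z <= 3/(2*r^2) * (G2 r z ^2 / 2)).
  { rewrite <- (is_RInt_unique _ _ _ _ HS).
    apply RInt_le; auto. apply exH; auto. eexists; exact HS.
    intros x Hx. unfold Hf. rewrite <- Rmult_assoc. apply Rmult_le_compat_r. apply Ff_ge0.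
    apply (G0_bound r0 Hint r x); lra. }
  rewrite Rabs_pos_eq by lra.
  assert (E : 3/(2*r^2) * (G2 r z ^2 / 2) = 3/4*(G2 r z^2/r^2)) by (field; auto).
  lra.
Qed.

Theorem corollary1 (r0 : R) (Hr0 : 0 < r0)
  (Hint : forall r beta, 0 <= r <= r0 -> 0 <= beta ->
     0 <= RInt (fun y => sqrt (r^2 + 2 * (sin y)^2) * (3/4 - (sin y)^2)) 0 beta) :
  forall r z, 0 < r <= r0 ->
    Rabs (G1 r z) <= 9/4 * (1/2) * ((G2 r z)^2 / r^2).
Proof.
  intros r z Hr. destruct (Rle_lt_dec 0 z) as [Hz|Hz].
  - now apply (main_pos r0 Hint).
  - assert (Hr' : r <> 0) by lra.
    rewrite <- (G1_even r z Hr').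
    replace (G2 r z ^ 2) with (G2 r (-z) ^2).
    2:{ rewrite G2_odd by auto. ring. }
    apply (main_pos r0 Hint); lra.
Qed.
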